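(* Let $\alpha > 0$, $\beta > 0$, $\tau > 0$, and let $I$ be an interval which is a finite union of mesh intervals $[k\tau,(k+1)\tau]$, $k \in \mathbb{Z}$. Let $u$ be continuous on $I$ and affine on each mesh interval, and let $v$ be its upwinded interpolant. Then $$\int_I |\dot v |^2 = \Phi(p) \int_I |\dot u|^2,$$ where $p=\beta \tau / \alpha $ is the P\'eclet number and $$\Phi(p) = \left ( \frac{\exp(p) +1}{\exp(p) -1} \right ) \frac{p}{2}.$$
   Context: The upwinded interpolant of a continuous function $u$ is the unique continuous function $v$ with $v(k\tau) = u(k\tau)$ at every node $k\tau$ and which, on each mesh interval $[k\tau, (k+1)\tau]$, is of the form $v(t) = c_1 + c_2 \exp(-\beta t/\alpha)$ for constants $c_1, c_2$ (depending on the interval). A dot denotes the derivative. *)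

(* Defs.v *)
From Stdlib Require Import Reals.
From Coquelicot Require Import Coquelicot.
Open Scope R_scope.

Definition Phi (p : R) : R := ((exp p + 1) / (exp p - 1)) * (p / 2).

Definition peclet (alpha beta tau : R) : R := beta * tau / alpha.

Definition in_mesh (tau : R) (k : Z) (t : R) : Prop :=
  IZR k * tau <= t <= (IZR k + 1) * tau.

Definition mesh_affine (tau : R) (a b : Z) (u : R -> R) : Prop :=
  forall k : Z, (a <= k < b)%Z ->
    exists c d : R, forall t, in_mesh tau k t -> u t = c + d * t.

Definition upwinded_interpolant (alpha beta tau : R) (a b : Z)
    (u v : R -> R) : Prop :=
  continuous_on (fun t => IZR a * tau <= t <= IZR b * tau) v /\
  (forall k : Z, (a <= k <= b)%Z -> v (IZR k * tau) = u (IZR k * tau)) /\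
  (forall k : Z, (a <= k < b)%Z ->
     exists c1 c2 : R, forall t, in_mesh tau k t ->
       v t = c1 + c2 * exp (- beta * t / alpha)).

(* Main.v *)
Require Import Defs.
From Stdlib Require Import Reals ZArith Lra Lia.
From Coquelicot Require Import Coquelicot.
Open Scope R_scope.
Lemma loc_int (l r x : R) (P : R -> Prop) : l < x < r -> (forall t, l < t < r -> P t) -> locally x P.
Proof.
  intros Hx H. apply filter_imp with (P := fun t => l < t < r); [exact H|].
  apply (open_and (fun t => l < t) (fun t => t < r)); [apply open_gt|apply open_lt|exact Hx].
Qed.

Lemma piece (alpha beta tau l c d c1 c2 : R) (u v : R -> R) :
  0 < alpha -> 0 < beta -> 0 < tau ->
  (forall t, l <= t <= l + tau -> u t = c + d * t) ->
  (forall t, l <= t <= l + tau -> v t = c1 + c2 * exp (- beta * t / alpha)) ->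
  v l = u l -> v (l + tau) = u (l + tau) ->
  ex_RInt (fun t => Rabs (Derive v t) ^ 2) l (l + tau) /\
  ex_RInt (fun t => Rabs (Derive u t) ^ 2) l (l + tau) /\
  RInt (fun t => Rabs (Derive v t) ^ 2) l (l + tau) =
  Phi (peclet alpha beta tau) * RInt (fun t => Rabs (Derive u t) ^ 2) l (l + tau).
Proof.
  intros Ha Hb Ht Hu Hv H0 H1.
  assert (Hmin : Rmin l (l + tau) = l) by (apply Rmin_left; lra).
  assert (Hmax : Rmax l (l + tau) = l + tau) by (apply Rmax_right; lra).
  set (g := fun t => (c2 * (- beta / alpha)) ^ 2 * exp (-2 * beta * t / alpha)).
  set (F := fun t => (c2 * (- beta / alpha)) ^ 2 * (- alpha / (2 * beta)) * exp (-2 * beta * t / alpha)).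
  assert (Eu : forall x, Rmin l (l + tau) < x < Rmax l (l + tau) ->
     d ^ 2 = Rabs (Derive u x) ^ 2).
  { intros x Hx. rewrite Hmin, Hmax in Hx. rewrite pow2_abs. f_equal. symmetry.
    apply is_derive_unique. apply is_derive_ext_loc with (f := fun t => c + d * t).
    apply (loc_int l (l + tau)); [exact Hx|]. intros t Ht'. symmetry. apply Hu; lra.
    auto_derive; [exact I| ring]. }
  assert (Ev : forall x, Rmin l (l + tau) < x < Rmax l (l + tau) ->
     g x = Rabs (Derive v x) ^ 2).
  { intros x Hx. rewrite Hmin, Hmax in Hx. rewrite pow2_abs. unfold g.
    replace (Derive v x) with (c2 * (- beta / alpha) * exp (- beta * x / alpha)).
    replace (exp (-2 * beta * x / alpha)) with (exp (- beta * x / alpha) * exp (- beta * x / alpha)). ring. rewrite <- exp_plus. f_equal. field. lra.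
    symmetry.
    apply is_derive_unique. apply is_derive_ext_loc with (f := fun t => c1 + c2 * exp (- beta * t / alpha)).
    apply (loc_int l (l + tau)); [exact Hx|]. intros t Ht'. symmetry. apply Hv; lra.
    auto_derive; [exact I| unfold Rdiv; ring]. }
  assert (Ig : is_RInt g l (l + tau) (minus (F (l + tau)) (F l))).
  { apply (is_RInt_derive F g). intros x _. unfold F, g. auto_derive; [exact I| unfold Rdiv; field; lra].
    intros x _. apply (ex_derive_continuous g). unfold g. auto_derive. exact I. }
  split; [|split].
  - apply (ex_RInt_ext g). exact Ev. exists (minus (F (l + tau)) (F l)). exact Ig.
  - apply (ex_RInt_ext (fun _ => d ^ 2)). exact Eu. apply ex_RInt_const.
  - rewrite <- (RInt_ext g (fun t => Rabs (Derive v t) ^ 2)) by exact Ev. rewrite <- (RInt_ext (fun _ => d ^ 2) (fun t => Rabs (Derive u t) ^ 2)) by exact Eu.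
    rewrite (is_RInt_unique _ _ _ _ Ig), RInt_const.
    assert (HQ : 1 < exp (beta * tau / alpha)).
    { rewrite <- exp_0. apply exp_increasing. apply Rdiv_lt_0_compat; [apply Rmult_lt_0_compat|]; lra. }
    set (Q := exp (beta * tau / alpha)) in *.
    set (E0 := exp (- beta * l / alpha)).
    assert (E1 : exp (- beta * (l + tau) / alpha) = E0 / Q).
    { unfold E0, Q. replace (- beta * (l + tau) / alpha) with (- beta * l / alpha + - (beta * tau / alpha)) by (field; lra).
      rewrite exp_plus, exp_Ropp. reflexivity. }
    assert (E2 : forall t, exp (-2 * beta * t / alpha) = exp (- beta * t / alpha) ^ 2).
    { intros t. simpl. rewrite Rmult_1_r, <- exp_plus. f_equal. field. lra. }
    assert (Hd : d * tau = c2 * (E0 / Q - E0)).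
    { rewrite Hu in H0, H1 by lra. rewrite Hv in H0, H1 by lra. rewrite E1 in H1. fold E0 in H0. lra. }
    assert (Hd' : d = c2 * (E0 / Q - E0) / tau) by (rewrite <- Hd; field; lra).
    unfold minus, plus, opp, scal; simpl. unfold mult; simpl. unfold F, Phi, peclet.
    rewrite !E2, E1. fold E0. fold Q. rewrite Hd'. field. repeat split; lra.
Qed.

Lemma combine (tau C : R) (a : Z) (f g : R -> R) (m : nat) :
  (forall k, (a <= k < a + Z.of_nat (S m))%Z ->
     ex_RInt f (IZR k * tau) (IZR k * tau + tau) /\ ex_RInt g (IZR k * tau) (IZR k * tau + tau) /\
     RInt f (IZR k * tau) (IZR k * tau + tau) = C * RInt g (IZR k * tau) (IZR k * tau + tau)) ->
  ex_RInt f (IZR a * tau) (IZR (a + Z.of_nat (S m)) * tau) /\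
  ex_RInt g (IZR a * tau) (IZR (a + Z.of_nat (S m)) * tau) /\
  RInt f (IZR a * tau) (IZR (a + Z.of_nat (S m)) * tau) =
  C * RInt g (IZR a * tau) (IZR (a + Z.of_nat (S m)) * tau).
Proof.
  induction m as [|m IH]; intros H.
  - replace (IZR (a + Z.of_nat 1) * tau) with (IZR a * tau + tau)
      by (rewrite plus_IZR; simpl; ring).
    apply H. simpl. lia.
  - destruct IH as [If [Ig E]].
    { intros k Hk. apply H. lia. }
    destruct (H (a + Z.of_nat (S m))%Z) as [Jf [Jg F]]. lia.
    replace (IZR (a + Z.of_nat (S (S m))) * tau) with (IZR (a + Z.of_nat (S m)) * tau + tau)
      by (replace (a + Z.of_nat (S (S m)))%Z with ((a + Z.of_nat (S m)) + 1)%Z by lia; rewrite (plus_IZR _ 1); ring).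
    split; [|split].
    + eapply ex_RInt_Chasles; eauto.
    + eapply ex_RInt_Chasles; eauto.
    + rewrite <- (RInt_Chasles f _ _ _ If Jf), <- (RInt_Chasles g _ _ _ Ig Jg).
      rewrite E, F. unfold plus; simpl. ring.
Qed.

Theorem proposition10 (alpha beta tau : R) (a b : Z) (u v : R -> R) :
  0 < alpha -> 0 < beta -> 0 < tau -> (a < b)%Z ->
  continuous_on (fun t => IZR a * tau <= t <= IZR b * tau) u ->
  mesh_affine tau a b u ->
  upwinded_interpolant alpha beta tau a b u v ->
  RInt (fun t => Rabs (Derive v t) ^ 2) (IZR a * tau) (IZR b * tau)
  = Phi (peclet alpha beta tau) *
    RInt (fun t => Rabs (Derive u t) ^ 2) (IZR a * tau) (IZR b * tau).
Proof.
  intros Ha Hb Ht Hab _ Hu [_ [Hn Hv]].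
  assert (Eb : b = (a + Z.of_nat (S (Z.to_nat (b - a - 1))))%Z).
  { rewrite Nat2Z.inj_succ, Z2Nat.id; lia. }
  rewrite Eb.
  apply combine.
  intros k Hk. rewrite <- Eb in Hk.
  destruct (Hu k Hk) as [c [d Hcd]].
  destruct (Hv k Hk) as [c1 [c2 Hc]].
  unfold in_mesh in *.
  apply (piece alpha beta tau (IZR k * tau) c d c1 c2 u v Ha Hb Ht).
  - intros t Htt. apply Hcd. lra.
  - intros t Htt. apply Hc. lra.
  - apply Hn. lia.
  - replace (IZR k * tau + tau) with (IZR (k + 1) * tau) by (rewrite plus_IZR; ring).
    apply Hn. lia.
Qed.
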